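(* Let $\mathcal{A}$ and $\mathcal{B}$ be $C^{*}$-algebras, let $\Xi$ be a Hilbert $\mathcal{A}$-module and $\nabla$ a Hilbert $\mathcal{B}$-module. Let $p>3$, let $\theta$ be a nonnegative real number and let $f:\Xi\rightarrow\nabla$ be a mapping such that $$\| f(\mu x+y)-\mu f(x)-f(y)\| \leq \theta\left(\|x\|^{p}+\|y\|^{p}\right),$$ $$\| f(\langle x,y\rangle z)-\langle f(x),f(y)\rangle f(z)\| \leq \theta\left(\|x\|^{p}+\|y\|^{p}+\|z\|^{p}\right),$$ $$\| f(\langle x,y\rangle^{*} z)-\langle f(x),f(y)\rangle^{*} f(z)\| \leq \theta\left(\|x\|^{p}+\|y\|^{p}+\|z\|^{p}\right)$$ for all $x,y,z\in\Xi$ and all $\mu\in\mathbb{T}$. Then there exists a unique Hilbert $C^{*}$-module $\ast$-homomorphism $H:\Xi\rightarrow\nabla$ such that $$\|f(x)-H(x)\|\leq \frac{2\theta}{2^{p}-2^{3}}\|x\|^{p}$$ for all $x\in\Xi$.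
   Context: $\mathbb{T}=\{z\in\mathbb{C}:|z|=1\}$. For a $C^{*}$-algebra $\mathcal{A}$, a (left) Hilbert $\mathcal{A}$-module is a complex linear space $\Xi$ with a compatible left $\mathcal{A}$-module action ($\lambda(ax)=(\lambda a)x=a(\lambda x)$) and a map $\langle\cdot,\cdot\rangle:\Xi\times\Xi\to\mathcal{A}$ that is linear in the first variable, satisfies $\langle ax,y\rangle=a\langle x,y\rangle$, $\langle x,y\rangle^{*}=\langle y,x\rangle$, $\langle x,x\rangle\geq 0$ with equality iff $x=0$, and such that $\Xi$ is complete in the norm $\|x\|=\|\langle x,x\rangle\|^{1/2}$. For a Hilbert $\mathcal{A}$-module $\Xi$ and a Hilbert $\mathcal{B}$-module $\nabla$, a Hilbert $C^{*}$-module homomorphism is a $\mathbb{C}$-linear map $H:\Xi\to\nabla$ with $H(\langle x,y\rangle z)=\langle H(x),H(y)\rangle H(z)$ for all $x,y,z\in\Xi$; it is a Hilbert $C^{*}$-module $\ast$-homomorphism if moreover $H(\langle x,y\rangle^{*} z)=\langle H(x),H(y)\rangle^{*} H(z)$ for all $x,y,z\in\Xi$. *)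

(* Defs.v *)
From HB Require Import structures.
From mathcomp Require Import all_boot all_order all_algebra.
From mathcomp Require Import complex.
From mathcomp Require Import reals exp.
Set Implicit Arguments.
Unset Strict Implicit.
Unset Printing Implicit Defensive.
Import Order.TTheory GRing.Theory Num.Theory.
Local Open Scope ring_scope.

Section HilbertModules.
Variable R : realType.
Local Notation C := R[i].

Definition cabs (l : C) : R := Num.sqrt (complex.Re l ^+ 2 + complex.Im l ^+ 2).

Definition cconj (l : C) : C := conjc l.

Definition complete_for (T : zmodType) (n : T -> R) : Prop :=
  forall u : nat -> T,
    (forall e : R, 0 < e -> exists N : nat, forall m k : nat,
        (N <= m)%N -> (N <= k)%N -> n (u m - u k) < e) ->
    exists l : T, forall e : R, 0 < e -> exists N : nat, forall m : nat,
        (N <= m)%N -> n (u m - l) < e.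

Section CStar.
Variables (A : lmodType C) (mul : A -> A -> A) (star : A -> A) (nrm : A -> R).

Record is_cstar_algebra : Prop := {
  cs_mulDl : forall (l : C) (x y z : A), mul (l *: x + y) z = l *: mul x z + mul y z;
  cs_mulDr : forall (l : C) (x y z : A), mul x (l *: y + z) = l *: mul x y + mul x z;
  cs_mulA : forall x y z : A, mul x (mul y z) = mul (mul x y) z;
  cs_starD : forall x y : A, star (x + y) = star x + star y;
  cs_starZ : forall (l : C) (x : A), star (l *: x) = cconj l *: star x;
  cs_starK : forall x : A, star (star x) = x;
  cs_starM : forall x y : A, star (mul x y) = mul (star y) (star x);
  cs_norm_eq0 : forall x : A, nrm x = 0 <-> x = 0;
  cs_normD : forall x y : A, nrm (x + y) <= nrm x + nrm y;
  cs_normZ : forall (l : C) (x : A), nrm (l *: x) = cabs l * nrm x;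
  cs_normM : forall x y : A, nrm (mul x y) <= nrm x * nrm y;
  cs_cstar : forall x : A, nrm (mul (star x) x) = nrm x ^+ 2;
  cs_complete : complete_for nrm
}.

(* Positivity in a (possibly non-unital) C*-algebra: a is self-adjoint and
   its spectrum (computed in the unitization A + C) lies in [0, +oo).
   For l <> 0, l is outside the spectrum of a iff (l 1 - a) is invertible
   in the unitization, i.e. there is b with
   (l 1 - a)(l^-1 1 + b) = 1 = (l^-1 1 + b)(l 1 - a), which unfolds to the
   two equations below.  In the complex field R[i], [0 <= l] means that l is
   a nonnegative real number (in particular 0 is always allowed in the
   spectrum). *)
Definition cs_pos (a : A) : Prop :=
  star a = a /\
  forall l : C, ~ (0 <= l) ->
    exists b : A, l *: b - mul a b - l^-1 *: a = 0 /\
                  l *: b - mul b a - l^-1 *: a = 0.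

Section Module.
Variables (X : lmodType C) (act : A -> X -> X) (ip : X -> X -> A).

Definition hm_norm (x : X) : R := Num.sqrt (nrm (ip x x)).

(* The last three fields are standard
   consequences of the others (triangle inequality for the module norm,
   Cauchy-Schwarz inequality, and ||a x|| <= ||a|| ||x||); they are recorded
   explicitly since the paper uses that ||.|| is a norm; they do not change
   the class of structures described. *)
Record is_hilbert_module : Prop := {
  hm_actDl : forall (a b : A) (x : X), act (a + b) x = act a x + act b x;
  hm_actDr : forall (a : A) (x y : X), act a (x + y) = act a x + act a y;
  hm_actM : forall (a b : A) (x : X), act (mul a b) x = act a (act b x);
  hm_actZl : forall (l : C) (a : A) (x : X), act (l *: a) x = l *: act a x;
  hm_actZr : forall (l : C) (a : A) (x : X), act a (l *: x) = l *: act a x;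
  hm_ip_linl : forall (l : C) (x y z : X), ip (l *: x + y) z = l *: ip x z + ip y z;
  hm_ip_act : forall (a : A) (x y : X), ip (act a x) y = mul a (ip x y);
  hm_ip_star : forall x y : X, star (ip x y) = ip y x;
  hm_ip_pos : forall x : X, cs_pos (ip x x);
  hm_ip_eq0 : forall x : X, ip x x = 0 <-> x = 0;
  hm_complete : complete_for hm_norm;
  hm_normD : forall x y : X, hm_norm (x + y) <= hm_norm x + hm_norm y;
  hm_cauchy_schwarz : forall x y : X, nrm (ip x y) <= hm_norm x * hm_norm y;
  hm_norm_act : forall (a : A) (x : X), hm_norm (act a x) <= nrm a * hm_norm x
}.

End Module.
End CStar.

Section Homs.
Variables (A : lmodType C) (starA : A -> A)
          (B : lmodType C) (starB : B -> B)
          (X : lmodType C) (actX : A -> X -> X) (ipX : X -> X -> A)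
          (Y : lmodType C) (actY : B -> Y -> Y) (ipY : Y -> Y -> B).

Definition hilbert_hom (H : X -> Y) : Prop :=
  (forall (l : C) (x y : X), H (l *: x + y) = l *: H x + H y) /\
  (forall x y z : X, H (actX (ipX x y) z) = actY (ipY (H x) (H y)) (H z)).

Definition hilbert_star_hom (H : X -> Y) : Prop :=
  hilbert_hom H /\
  (forall x y z : X,
      H (actX (starA (ipX x y)) z) = actY (starB (ipY (H x) (H y))) (H z)).
End Homs.

End HilbertModules.

(* Main.v *)
Require Import Defs.
From HB Require Import structures.
From mathcomp Require Import all_boot all_order all_algebra.
From mathcomp Require Import complex.
From mathcomp Require Import reals exp.
From mathcomp Require Import ring lra zify.
From Stdlib Require Import IndefiniteDescription FunctionalExtensionality.
Import Order.TTheory GRing.Theory Num.Theory.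
Local Open Scope ring_scope.

Module Aux.
Set Implicit Arguments. Unset Strict Implicit. Unset Printing Implicit Defensive.

Section Cplx.
Variable R : realType.
Lemma cabs_real (r : R) : 0 <= r -> cabs (r%:C)%C = r.
Proof. move=> r0; rewrite /cabs /= expr0n /= addr0 sqrtr_sqr ger0_norm //. Qed.
Lemma cabsN1 : cabs (-1 : R[i]) = 1.
Proof. by rewrite /cabs /= oppr0 expr0n /= addr0 sqrrN expr1n sqrtr1. Qed.
Lemma mul_conj (l : R[i]) : l * conjc l = ((complex.Re l)^+2 + (complex.Im l)^+2)%:C%C.
Proof. case: l => a b /=; simpc; congr Complex; rewrite ?expr2; ring. Qed.
Lemma cabs_mul_conj (l : R[i]) : cabs (l * conjc l) = cabs l ^+ 2.
Proof. rewrite mul_conj cabs_real ?addr_ge0 ?sqr_ge0 // /cabs sqr_sqrtr // addr_ge0 ?sqr_ge0 //. Qed.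
End Cplx.


Section Mod.
Variables (R : realType) (A : lmodType R[i]) (mul : A -> A -> A) (star : A -> A) (nrm : A -> R) (X : lmodType R[i]) (act : A -> X -> X) (ip : X -> X -> A).
Hypotheses (HA : is_cstar_algebra mul star nrm) (HX : is_hilbert_module mul star nrm act ip).
Local Notation N := (hm_norm nrm ip).

Lemma nrm0 : nrm 0 = 0.
Proof. exact: (proj2 (cs_norm_eq0 HA 0) erefl). Qed.
Lemma nrm_ge0 a : 0 <= nrm a.
Proof.
have := cs_normD HA a (-a); rewrite subrr nrm0.
have -> : -a = (-1) *: a by rewrite scaleN1r.
rewrite (cs_normZ HA) cabsN1 mul1r => h; lra.
Qed.
Lemma ipDl x y z : ip (x + y) z = ip x z + ip y z.
Proof. by have := hm_ip_linl HX 1 x y z; rewrite !scale1r. Qed.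
Lemma ip0l z : ip 0 z = 0.
Proof. have h := ipDl 0 0 z; rewrite addr0 in h; apply: (addrI (ip 0 z)); by rewrite -h addr0. Qed.
Lemma ipZl l x z : ip (l *: x) z = l *: ip x z.
Proof. by have := hm_ip_linl HX l x 0 z; rewrite !addr0 ip0l addr0. Qed.
Lemma ipZr l x y : ip x (l *: y) = conjc l *: ip x y.
Proof. by rewrite -(hm_ip_star HX) ipZl (cs_starZ HA) (hm_ip_star HX). Qed.
Lemma ipDr x y z : ip x (y + z) = ip x y + ip x z.
Proof. by rewrite -(hm_ip_star HX) ipDl (cs_starD HA) !(hm_ip_star HX). Qed.
Lemma N_ge0 x : 0 <= N x.
Proof. exact: sqrtr_ge0. Qed.
Lemma NZ l x : N (l *: x) = cabs l * N x.
Proof.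
rewrite /hm_norm ipZl ipZr scalerA (cs_normZ HA) cabs_mul_conj sqrtrM ?sqr_ge0 //.
by rewrite sqrtr_sqr ger0_norm // sqrtr_ge0.
Qed.
Lemma NN x : N (- x) = N x.
Proof. by rewrite -scaleN1r NZ cabsN1 mul1r. Qed.
Lemma ND x y : N (x + y) <= N x + N y.
Proof. exact: (hm_normD HX). Qed.
Lemma N_eq0 x : N x = 0 -> x = 0.
Proof.
move=> /eqP; rewrite /hm_norm sqrtr_eq0 => h.
have h0 : nrm (ip x x) = 0 by apply/eqP; rewrite eq_le h nrm_ge0.
by apply/(hm_ip_eq0 HX); apply/(cs_norm_eq0 HA).
Qed.
Lemma N0 : N 0 = 0.
Proof. by rewrite /hm_norm ip0l nrm0 sqrtr0. Qed.
Lemma NB x y : N (x - y) = N (y - x).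
Proof. by rewrite -NN opprB. Qed.
Lemma N_tri3 x y z : N (x - z) <= N (x - y) + N (y - z).
Proof. by have := ND (x - y) (y - z); rewrite addrA subrK. Qed.

Definition T x y z := act (ip x y) z.
Lemma act0l z : act 0 z = 0.
Proof. have h := hm_actDl HX 0 0 z; rewrite addr0 in h; apply: (addrI (act 0 z)); by rewrite -h addr0. Qed.
Lemma TDl x x' y z : T (x + x') y z = T x y z + T x' y z.
Proof. by rewrite /T ipDl (hm_actDl HX). Qed.
Lemma TDm x y y' z : T x (y + y') z = T x y z + T x y' z.
Proof. by rewrite /T ipDr (hm_actDl HX). Qed.
Lemma TDr x y z z' : T x y (z + z') = T x y z + T x y z'.
Proof. by rewrite /T (hm_actDr HX). Qed.
Lemma TBl x x' y z : T (x - x') y z = T x y z - T x' y z.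
Proof. by rewrite -{2}[x](subrK x') [in RHS]TDl addrK. Qed.
Lemma TBm x y y' z : T x (y - y') z = T x y z - T x y' z.
Proof. by rewrite -{2}[y](subrK y') [in RHS]TDm addrK. Qed.
Lemma TBr x y z z' : T x y (z - z') = T x y z - T x y z'.
Proof. by rewrite -{2}[z](subrK z') [in RHS]TDr addrK. Qed.
Lemma TZ l x y z : T (l *: x) (l *: y) (l *: z) = (l * conjc l * l) *: T x y z.
Proof. by rewrite /T ipZl ipZr scalerA (hm_actZl HX) (hm_actZr HX) scalerA. Qed.
Lemma T_norm x y z : N (T x y z) <= N x * N y * N z.
Proof.
rewrite /T; apply: le_trans (hm_norm_act HX _ _) _.
apply: ler_wpM2r; first exact: N_ge0. exact: (hm_cauchy_schwarz HX).
Qed.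
Lemma T_diff a b c a' b' c' :
  N (T a b c - T a' b' c') <=
  N (a - a') * N b * N c + N a' * N (b - b') * N c + N a' * N b' * N (c - c').
Proof.
have -> : T a b c - T a' b' c' = T (a - a') b c + T a' (b - b') c + T a' b' (c - c').
  by rewrite TBl TBm TBr !addrA !subrK.
apply: le_trans (ND _ _) _; apply: lerD; last exact: T_norm.
apply: le_trans (ND _ _) _; apply: lerD; exact: T_norm.
Qed.
End Mod.


Section Geo.
Variable R : realType.
Lemma geo_bound (r : R) n : 0 <= r <= 1 -> r ^+ n * (1 + n%:R * (1 - r)) <= 1.
Proof.
move=> /andP[r0 r1]; elim: n => [|n IH]; first by rewrite expr0 mul0r addr0 mulr1.
have h1 : r ^+ n.+1 <= 1 by rewrite exprn_ile1.
have h0 : 0 <= r ^+ n by rewrite exprn_ge0.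
rewrite exprS -natr1.
have : r * (r ^+ n * (1 + n%:R * (1 - r))) <= r * 1 by rewrite ler_wpM2l.
rewrite exprS in h1.
nra.
Qed.
Lemma geo_small (r a e : R) : 0 <= r < 1 -> 0 <= a -> 0 < e -> exists n : nat, a * r ^+ n < e.
Proof.
move=> /andP[r0 r1] a0 e0.
set m := a / (e * (1 - r)).
have m0 : 0 <= m by rewrite /m divr_ge0 // mulr_ge0 // ?ltW // subr_gt0.
exists (Num.bound m).
have hb := archi_boundP m0.
set k : R := (Num.bound m)%:R in hb *.
have hg := @geo_bound r (Num.bound m).
rewrite -/k in hg.
have {}hg := hg ltac:(by rewrite r0 ltW).
have hmk : a < e * (1 - r) * k.
  have : m * (e * (1 - r)) = a by rewrite /m mulfVK // mulf_neq0 ?gt_eqF // subr_gt0.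
  have : 0 < e * (1 - r) by rewrite mulr_gt0 // subr_gt0.
  nra.
have hr : 0 <= r ^+ (Num.bound m) by rewrite exprn_ge0.
have k0 : 0 <= k by rewrite /k ler0n.
set t := r ^+ _ in hg hr *.
set s := k * (1 - r) in hg.
have s0 : 0 < s by rewrite /s; nra.
have h1 : a * t * (1 + s) <= a by have := ler_wpM2l a0 hg; rewrite mulr1 mulrA.
have hat : 0 <= a * t by rewrite mulr_ge0.
have h3 : a * t * s <= a by nra.
have h4 : e * (1 - r) * k = e * s by rewrite /s; ring.
have h2 : a * t * s < e * s by rewrite -h4; exact: le_lt_trans h3 hmk.
by rewrite -(ltr_pM2r s0).
Qed.
Lemma geo_zero (r a v : R) : 0 <= r < 1 -> 0 <= a -> (forall n, v <= a * r ^+ n) -> v <= 0.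
Proof.
move=> hr a0 h; rewrite leNgt; apply/negP => v0.
have [n hn] := @geo_small r a v hr a0 v0.
by have := h n; rewrite leNgt hn.
Qed.
End Geo.


Section Scal.
Variable R : realType.
Definition half : R := 2^-1.
Definition sc n : R[i] := ((half ^+ n)%:C)%C.
Definition tc n : R[i] := (((2:R) ^+ n)%:C)%C.

Lemma half_gt0 : 0 < half. Proof. by rewrite /half invr_gt0. Qed.
Lemma cabs_sc n : cabs (sc n) = half ^+ n.
Proof. by rewrite /sc cabs_real // exprn_ge0 // ltW // half_gt0. Qed.
Lemma cabs_tc n : cabs (tc n) = 2 ^+ n.
Proof. by rewrite /tc cabs_real // exprn_ge0. Qed.
Lemma conj_sc n : conjc (sc n) = sc n. Proof. exact: conjc_real. Qed.
Lemma conj_tc n : conjc (tc n) = tc n. Proof. exact: conjc_real. Qed.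
Lemma tcsc n : tc n * sc n = 1.
Proof. rewrite /tc /sc -rmorphM /= -exprMn /half mulfV //; last by rewrite pnatr_eq0. by rewrite expr1n. Qed.
Lemma sc0 : sc 0 = 1. Proof. by rewrite /sc expr0. Qed.
Lemma tc0 : tc 0 = 1. Proof. by rewrite /tc expr0. Qed.
Lemma scS n : sc n = (1 + 1) * sc n.+1.
Proof.
have -> : (1 + 1 : R[i]) = ((2 : R)%:C)%C by rewrite rmorphD rmorph1.
rewrite /sc exprS -rmorphM /= mulrA /half mulfV ?mul1r //.
by rewrite pnatr_eq0.
Qed.
Lemma tcS n : tc n.+1 = tc n * (1 + 1).
Proof. by rewrite /tc exprSr rmorphM /= rmorphD rmorph1. Qed.
Lemma sc3 n : sc n * conjc (sc n) * sc n = sc (n * 3).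
Proof. by rewrite conj_sc /sc -!rmorphM /= -!exprD; congr (_ %:C)%C; congr (_ ^+ _); lia. Qed.
Lemma tc3 n : tc n * conjc (tc n) * tc n = tc (n * 3).
Proof. by rewrite conj_tc /tc -!rmorphM /= -!exprD; congr (_ %:C)%C; congr (_ ^+ _); lia. Qed.

Lemma powR_exprn (a p : R) n : 0 <= a -> (a ^+ n) `^ p = (a `^ p) ^+ n.
Proof.
move=> a0; rewrite -powR_mulrn // -powRrM mulrC powRrM powR_mulrn //.
exact: powR_ge0.
Qed.
Lemma half_powR (p : R) : half `^ p = (2 `^ p)^-1.
Proof. by rewrite /half -powR_inv1 // -powRrM mulN1r powRN. Qed.
Lemma P_gt8 (p : R) : 3 < p -> 2 ^+ 3 < 2 `^ p.
Proof.
move=> p3; have h2 : ((2:R) == 0) = false by rewrite pnatr_eq0.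
rewrite -powR_mulrn // /powR h2.
rewrite ltr_expR ltr_pM2r // ln_gt0 //; lra.
Qed.
End Scal.
Arguments sc {R} n. Arguments tc {R} n. Arguments half {R}.


Section Dec.
Variable R : realType.
Lemma cabs1 (u v : R) : u ^+ 2 + v ^+ 2 = 1 -> cabs (Complex u v) = 1.
Proof. by rewrite /cabs /= => ->; rewrite sqrtr1. Qed.
Lemma decomp (a b : R) : a ^+ 2 + b ^+ 2 <= 4 ->
  exists mu1 mu2 : R[i], cabs mu1 = 1 /\ cabs mu2 = 1 /\ Complex a b = mu1 + mu2.
Proof.
move=> h.
have [ab0|abn0] := eqVneq (a ^+ 2 + b ^+ 2) 0.
  have a0 : a = 0 by apply/eqP; rewrite -sqrf_eq0 eq_le sqr_ge0 andbT; nra.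
  have b0 : b = 0 by apply/eqP; rewrite -sqrf_eq0 eq_le sqr_ge0 andbT; nra.
  exists 1, (-1); split; first by apply: cabs1; rewrite expr0n /= expr1n addr0.
  split; first by apply: cabs1; rewrite /= oppr0 expr0n /= sqrrN expr1n addr0.
  by rewrite subrr a0 b0.
set r := Num.sqrt (a ^+ 2 + b ^+ 2).
have s0 : 0 <= a ^+ 2 + b ^+ 2 by rewrite addr_ge0 ?sqr_ge0.
have hr2 : r ^+ 2 = a ^+ 2 + b ^+ 2 by rewrite sqr_sqrtr.
have rn0 : r != 0 by rewrite sqrtr_eq0 -ltNge lt_def abn0 s0.
set w := Num.sqrt (1 - r ^+ 2 / 4).
have hw2 : w ^+ 2 = 1 - r ^+ 2 / 4 by rewrite sqr_sqrtr // hr2; lra.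
exists (Complex (a / 2 - b * w / r) (b / 2 + a * w / r)).
exists (Complex (a / 2 + b * w / r) (b / 2 - a * w / r)).
split.
  apply: cabs1.
  have -> : (a / 2 - b * w / r) ^+ 2 + (b / 2 + a * w / r) ^+ 2 =
    (a ^+ 2 + b ^+ 2) / 4 + (a ^+ 2 + b ^+ 2) * w ^+ 2 / r ^+ 2 by field.
  by rewrite -hr2 hw2; field.
split.
  apply: cabs1.
  have -> : (a / 2 + b * w / r) ^+ 2 + (b / 2 - a * w / r) ^+ 2 =
    (a ^+ 2 + b ^+ 2) / 4 + (a ^+ 2 + b ^+ 2) * w ^+ 2 / r ^+ 2 by field.
  by rewrite -hr2 hw2; field.
rewrite -[Complex _ _ + Complex _ _]/(Complex _ _).
by congr Complex; field.
Qed.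
Lemma mulrn_complex (a b : R) M : (Complex a b) *+ M = Complex (a *+ M) (b *+ M).
Proof. by elim: M => [//|M IH]; rewrite !mulrS IH. Qed.
Lemma decompM (l : R[i]) : exists (M : nat) (mu1 mu2 : R[i]),
  cabs mu1 = 1 /\ cabs mu2 = 1 /\ l = (mu1 + mu2) *+ M.
Proof.
case: l => a0 b0.
set m := a0 ^+ 2 + b0 ^+ 2.
have m0 : 0 <= m by rewrite addr_ge0 ?sqr_ge0.
set M := (Num.bound m).+1.
have hM : m < M%:R by rewrite /M -natr1; have := archi_boundP m0; lra.
have M1 : 1 <= (M%:R : R) by rewrite /M ler1n.
have Mn0 : (M%:R : R) != 0 by rewrite gt_eqF //; lra.
have hd : (a0 / M%:R) ^+ 2 + (b0 / M%:R) ^+ 2 <= 4.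
  have -> : (a0 / M%:R) ^+ 2 + (b0 / M%:R) ^+ 2 = m / (M%:R ^+ 2) by rewrite /m; field.
  rewrite ler_pdivrMr ?exprn_gt0 //.
  have : (M%:R : R) <= M%:R ^+ 2 by rewrite expr2 ler_peMl //; lra.
  lra.
have [mu1 [mu2 [h1 [h2 e]]]] := decomp hd.
exists M, mu1, mu2; split => //; split => //.
have hh : forall x : R, (x / M%:R) *+ M = x by move=> x; rewrite -[(x / M%:R) *+ M]mulr_natr divfK.
by rewrite -e mulrn_complex !hh.
Qed.
End Dec.


Section Main.
Variables (R : realType)
  (A : lmodType R[i]) (mulA : A -> A -> A) (starA : A -> A) (nA : A -> R)
  (B : lmodType R[i]) (mulB : B -> B -> B) (starB : B -> B) (nB : B -> R)
  (X : lmodType R[i]) (actX : A -> X -> X) (ipX : X -> X -> A)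
  (Y : lmodType R[i]) (actY : B -> Y -> Y) (ipY : Y -> Y -> B).
Hypotheses (HA : is_cstar_algebra mulA starA nA)
  (HB : is_cstar_algebra mulB starB nB)
  (HX : is_hilbert_module mulA starA nA actX ipX)
  (HY : is_hilbert_module mulB starB nB actY ipY).
Variables (p theta : R) (f : X -> Y).
Hypotheses (hp : 3 < p) (ht : 0 <= theta).
Hypothesis hadd : forall (mu : R[i]) (x y : X), cabs mu = 1 ->
     hm_norm nB ipY (f (mu *: x + y) - mu *: f x - f y)
       <= theta * (hm_norm nA ipX x `^ p + hm_norm nA ipX y `^ p).
Hypothesis hhom : forall x y z : X,
     hm_norm nB ipY (f (actX (ipX x y) z) - actY (ipY (f x) (f y)) (f z))
       <= theta * (hm_norm nA ipX x `^ p + hm_norm nA ipX y `^ p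
                   + hm_norm nA ipX z `^ p).

Local Notation NX := (hm_norm nA ipX).
Local Notation NY := (hm_norm nB ipY).

Let NYZ := NZ HB HY.
Let NXZ := NZ HA HX.
Let NY3 := N_tri3 HY.
Let NYD := ND HY.
Let NYB := NB HB HY.
Let NXB := NB HA HX.
Let NY0 := N0 HB HY.

Definition PP := 2 `^ p.
Definition qP := PP^-1.
Definition q := 2 * qP.
Definition r8 := 2 ^+ 3 * qP.
Definition c x := theta * NX x `^ p.
Definition g n x := tc n *: f (sc n *: x).
Definition K x := c x * q / (1 - q).

Lemma PP_gt : 2 ^+ 3 < PP. Proof. exact: P_gt8. Qed.
Lemma PP_gt0 : 0 < PP. Proof. have := PP_gt; lra. Qed.
Lemma qP_ge0 : 0 <= qP. Proof. by rewrite /qP invr_ge0 ltW // PP_gt0. Qed.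
Lemma r8_ge0 : 0 <= r8. Proof. by rewrite /r8 mulr_ge0 ?qP_ge0 ?exprn_ge0. Qed.
Lemma r8_lt1 : r8 < 1.
Proof. rewrite /r8 /qP ltr_pdivrMr ?PP_gt0 // mul1r; exact: PP_gt. Qed.
Lemma q_ge0 : 0 <= q. Proof. by rewrite /q mulr_ge0 ?qP_ge0 ?exprn_ge0. Qed.
Lemma q_le_r8 : q <= r8.
Proof. rewrite /q /r8 ler_wpM2r ?qP_ge0 //; lra. Qed.
Lemma q_lt1 : q < 1. Proof. have := q_le_r8; have := r8_lt1; lra. Qed.
Lemma qn_le n : q ^+ n <= r8 ^+ n.
Proof. by rewrite lerXn2r // ?nnegrE ?q_ge0 ?r8_ge0 // q_le_r8. Qed.
Lemma qn_le1 n : q ^+ n <= 1.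
Proof. by rewrite exprn_ile1 // ?q_ge0 // ltW // q_lt1. Qed.
Lemma c_ge0 x : 0 <= c x. Proof. by rewrite /c mulr_ge0 // powR_ge0. Qed.
Lemma K_ge0 x : 0 <= K x.
Proof. rewrite /K divr_ge0 ?mulr_ge0 ?c_ge0 ?q_ge0 ?powR_ge0 ?qP_ge0 //. have := q_lt1; lra. Qed.
Lemma pow_sc n x : NX (sc n *: x) `^ p = NX x `^ p * qP ^+ n.
Proof.
rewrite NXZ cabs_sc powRM ?exprn_ge0 ?N_ge0 ?ltW ?half_gt0 //.
rewrite powR_exprn.
all: try exact: half_gt0.
all: try exact: (ltW half_gt0).
rewrite half_powR mulrC //. all: rewrite /half ?invr_ge0 ?invr_gt0 //.
Qed.
Lemma c_sc n x : c (sc n *: x) = c x * qP ^+ n.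
Proof. by rewrite /c pow_sc mulrA. Qed.

Lemma f_double y : NY (f (y + y) - (f y + f y)) <= 2 * c y.
Proof.
have h1 : cabs (1 : R[i]) = 1 by apply: cabs1; rewrite expr0n /= expr1n addr0.
have := hadd y y h1; rewrite !scale1r opprD addrA /c; lra.
Qed.

Lemma step n x : NY (g n.+1 x - g n x) <= c x * q ^+ n.+1.
Proof.
set y := sc n.+1 *: x.
have e1 : sc n *: x = y + y by rewrite /y -scalerDl scS mulrDl !mul1r.
have e2 : g n.+1 x - g n x = tc n *: ((f y + f y) - f (y + y)).
  by rewrite /g -e1 -/y tcS -scalerA scalerDl scale1r scalerBr.
rewrite e2 NYZ cabs_tc NYB.
apply: le_trans (ler_wpM2l (exprn_ge0 _ _) (f_double y)) _; first by [].
rewrite /y c_sc /q exprMn !exprS le_eqVlt; apply/orP; left; apply/eqP; ring.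
Qed.

Lemma cauchy k d x : NY (g (k + d) x - g k x) <= c x * q ^+ k.+1 * (1 - q ^+ d) / (1 - q).
Proof.
have q1 : 1 - q != 0 by have := q_lt1; rewrite subr_eq0 => h; apply/eqP; lra.
elim: d => [|d IH].
  by rewrite addn0 subrr NY0 expr0 subrr mulr0 mul0r.
apply: le_trans (NY3 _ (g (k + d) x) _) _.
rewrite addnS; apply: le_trans (lerD (step _ _) IH) _.
rewrite le_eqVlt; apply/orP; left; apply/eqP.
rewrite -addnS exprD !exprS; field; exact: q1.
Qed.

Lemma cauchyK k m x : (k <= m)%N -> NY (g m x - g k x) <= K x * q ^+ k.
Proof.
move=> km; rewrite -(subnKC km); apply: le_trans (cauchy _ _ _) _.
have q1 : 0 < 1 - q by have := q_lt1; lra.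
rewrite /K [X in _ <= X]mulrAC ler_pM2r ?invr_gt0 // exprS.
have h0 : 0 <= c x * (q * q ^+ k) by rewrite mulr_ge0 ?c_ge0 // mulr_ge0 ?q_ge0 // exprn_ge0 // q_ge0.
have h1 : 0 <= q ^+ (m - k) by rewrite exprn_ge0 // q_ge0.
rewrite -[c x * q * _]mulrA.
nra.
Qed.

Lemma limit_ex x : exists l, forall k, NY (g k x - l) <= K x * q ^+ k.
Proof.
have hq : 0 <= q < 1 by rewrite q_ge0 q_lt1.
have hc : forall e : R, 0 < e -> exists N : nat, forall m k : nat,
    (N <= m)%N -> (N <= k)%N -> NY (g m x - g k x) < e.
  move=> e e0.
  have [n0 hn0] := @geo_small R q (K x) e hq (K_ge0 x) e0.
  exists n0 => m k hm hk.
  have hK n : (n0 <= n)%N -> K x * q ^+ n < e.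
    move=> hn; apply: le_lt_trans hn0; apply: ler_wpM2l; first exact: K_ge0.
    by apply: ler_wiXn2l => //; [exact: q_ge0 | exact: ltW q_lt1].
  case: (leqP k m) => km.
    by apply: le_lt_trans (cauchyK _ km) (hK _ hk).
  by rewrite NYB; apply: le_lt_trans (cauchyK _ (ltnW km)) (hK _ hm).
have [l hl] := @hm_complete _ _ _ _ _ _ _ _ HY (fun j : nat => g j x) hc.
exists l => k; apply/ler_addgt0Pr => e e0.
have [N1 hN1] := hl e e0.
set m := maxn N1 k.
apply: le_trans (NY3 _ (g m x) _) _.
apply: lerD; last by apply: ltW; apply: hN1; rewrite leq_maxl.
by rewrite NYB; apply: cauchyK; rewrite leq_maxr.
Qed.

Definition H x := proj1_sig (constructive_indefinite_description _ (limit_ex x)).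
Lemma H_spec k x : NY (g k x - H x) <= K x * q ^+ k.
Proof. rewrite /H; case: constructive_indefinite_description => l hl /=; exact: hl. Qed.

Lemma g0 x : g 0 x = f x.
Proof. by rewrite /g sc0 tc0 !scale1r. Qed.

Lemma H_bound x : NY (f x - H x) <= (2 * theta) / (2 `^ p - 2 ^+ 3) * NX x `^ p.
Proof.
have := H_spec 0 x; rewrite g0 expr0 mulr1 => h; apply: le_trans h _.
have P8 := PP_gt; have P0 := PP_gt0.
have e : K x = (2 * theta) / (PP - 2) * NX x `^ p.
  rewrite /K /c /q /qP; field.
  by apply/andP; split; apply/eqP; lra.
rewrite e -/PP; apply: ler_wpM2r; first exact: powR_ge0.
rewrite -subr_ge0.
have -> : 2 * theta / (PP - 2 ^+ 3) - 2 * theta / (PP - 2) =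
   (12 * theta) / ((PP - 2 ^+ 3) * (PP - 2)).
  field; apply/andP; split; apply/eqP; lra.
rewrite divr_ge0 // ?mulr_ge0 //; lra.
Qed.

Lemma key3 (a b s r : R) : a * r + (b * r + s * r) <= (a + b + s) * r.
Proof. by rewrite !mulrDl addrA. Qed.

Lemma keyb3 (a b c d e f1 g1 r : R) :
  a * r * b * c + d * (e * r) * c + d * f1 * (g1 * r) = (a * b * c + d * e * c + d * f1 * g1) * r.
Proof. ring. Qed.

Lemma zero_of_bound (z : Y) a : 0 <= a -> (forall n, NY z <= a * r8 ^+ n) -> z = 0.
Proof.
move=> a0 h; apply: (N_eq0 HB HY); apply/eqP; rewrite eq_le N_ge0 andbT.
apply: (@geo_zero R r8 a) => //; by rewrite r8_ge0 r8_lt1.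
Qed.

Lemma qr n a : 0 <= a -> a * q ^+ n <= a * r8 ^+ n.
Proof. by move=> a0; apply: ler_wpM2l => //; exact: qn_le. Qed.

Lemma H_tadd mu x y : cabs mu = 1 -> H (mu *: x + y) = mu *: H x + H y.
Proof.
move=> hmu; apply/eqP; rewrite -subr_eq0; apply/eqP.
set w := mu *: x + y.
apply: (@zero_of_bound _ (K w + (c x + c y) + (K x + K y))).
  by rewrite !addr_ge0 ?K_ge0 ?c_ge0.
move=> n.
apply: le_trans (NY3 _ (g n w) _) _.
apply: le_trans (lerD (lexx _) (NY3 _ (mu *: g n x + g n y) _)) _.
have e1 : g n w - (mu *: g n x + g n y) = tc n *: (f (mu *: (sc n *: x) + sc n *: y) - mu *: f (sc n *: x) - f (sc n *: y)).
  rewrite /g /w scalerDr !scalerA [sc n * mu]mulrC -!scalerA.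
  by rewrite !scalerBr !scalerA [tc n * mu]mulrC -!scalerA opprD addrA.
have e2 : mu *: g n x + g n y - (mu *: H x + H y) = mu *: (g n x - H x) + (g n y - H y).
  by rewrite opprD addrACA scalerBr.
rewrite e1 e2 NYB NYZ cabs_tc.
have b1 := H_spec n w.
have b2 := hadd (sc n *: x) (sc n *: y) hmu.
have b3 : NY (mu *: (g n x - H x) + (g n y - H y)) <= K x * q ^+ n + K y * q ^+ n.
  apply: le_trans (NYD _ _) _; rewrite NYZ hmu mul1r; apply: lerD; exact: H_spec.
rewrite -!/(c _) in b2.
have b2' : 2 ^+ n * NY (f (mu *: (sc n *: x) + sc n *: y) - mu *: f (sc n *: x) - f (sc n *: y))
   <= (c x + c y) * q ^+ n.
  apply: le_trans (ler_wpM2l (exprn_ge0 _ _) b2) _ => //.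
  rewrite /c !pow_sc /q exprMn le_eqVlt; apply/orP; left; apply/eqP; ring.
rewrite -mulrDl in b3.
have cxy : 0 <= c x + c y by rewrite addr_ge0 ?c_ge0.
have kxy : 0 <= K x + K y by rewrite addr_ge0 ?K_ge0.
apply: le_trans (lerD b1 (lerD b2' b3)) _.
apply: le_trans (lerD (qr n (K_ge0 w)) (lerD (qr n cxy) (qr n kxy))) _.
exact: key3.
Qed.

Local Notation TX := (T actX ipX).
Local Notation TY := (T actY ipY).

Lemma Ng_le n y : NY (g n y) <= NY (H y) + K y.
Proof.
have := NY3 (g n y) (H y) 0; rewrite !subr0 => h; apply: le_trans h _.
rewrite addrC; apply: lerD => //.
apply: le_trans (H_spec n y) _; rewrite -[X in _ <= X]mulr1; apply: ler_wpM2l.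
  exact: K_ge0.
exact: qn_le1.
Qed.

Lemma H_hom x y z : H (TX x y z) = TY (H x) (H y) (H z).
Proof.
apply/eqP; rewrite -subr_eq0; apply/eqP.
set w := TX x y z.
set Bx := NY (H x) + K x. set By := NY (H y) + K y. set Bz := NY (H z) + K z.
have hBy : 0 <= By by rewrite addr_ge0 ?N_ge0 ?K_ge0.
have hBz : 0 <= Bz by rewrite addr_ge0 ?N_ge0 ?K_ge0.
have hHx : 0 <= NY (H x) by exact: N_ge0.
have hHy : 0 <= NY (H y) by exact: N_ge0.
apply: (@zero_of_bound _ (K w + (c x + c y + c z) +
   (K x * By * Bz + NY (H x) * K y * Bz + NY (H x) * NY (H y) * K z))).
  apply: addr_ge0; first by rewrite !addr_ge0 ?K_ge0 ?c_ge0.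
  apply: addr_ge0; first apply: addr_ge0.
  - exact: (mulr_ge0 (mulr_ge0 (K_ge0 x) hBy) hBz).
  - exact: (mulr_ge0 (mulr_ge0 hHx (K_ge0 y)) hBz).
  - exact: (mulr_ge0 (mulr_ge0 hHx hHy) (K_ge0 z)).
move=> n.
apply: le_trans (NY3 _ (g (n * 3) w) _) _.
apply: le_trans (lerD (lexx _) (NY3 _ (TY (g n x) (g n y) (g n z)) _)) _.
have e1 : g (n * 3) w - TY (g n x) (g n y) (g n z) = tc (n * 3) *:
   (f (actX (ipX (sc n *: x) (sc n *: y)) (sc n *: z))
    - actY (ipY (f (sc n *: x)) (f (sc n *: y))) (f (sc n *: z))).
  by rewrite /g -sc3 -tc3 /w -(TZ HA HX) (TZ HB HY) -scalerBr.
rewrite e1 NYZ cabs_tc NYB.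
have b1 := H_spec (n * 3) w.
have b1' : K w * q ^+ (n * 3) <= K w * r8 ^+ n.
  apply: le_trans (qr n (K_ge0 w)); apply: ler_wpM2l; first exact: K_ge0.
  apply: ler_wiXn2l; [exact: q_ge0 | exact: ltW q_lt1 | lia].
have b2 := hhom (sc n *: x) (sc n *: y) (sc n *: z).
have b2' : 2 ^+ (n * 3) * NY (f (actX (ipX (sc n *: x) (sc n *: y)) (sc n *: z))
    - actY (ipY (f (sc n *: x)) (f (sc n *: y))) (f (sc n *: z)))
   <= (c x + c y + c z) * r8 ^+ n.
  apply: le_trans (ler_wpM2l (exprn_ge0 _ _) b2) _ => //.
  rewrite /c !pow_sc /r8 exprMn [(n * 3)%N]mulnC exprM le_eqVlt; apply/orP; left; apply/eqP; ring.
have b3 : NY (TY (g n x) (g n y) (g n z) - TY (H x) (H y) (H z)) <=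
   (K x * By * Bz + NY (H x) * K y * Bz + NY (H x) * NY (H y) * K z) * q ^+ n.
  apply: le_trans (T_diff HB HY _ _ _ _ _ _) _.
  have hx := H_spec n x. have hy := H_spec n y. have hz := H_spec n z.
  have gy := Ng_le n y. have gz := Ng_le n z.
  have n1 : 0 <= NY (g n x - H x) by exact: N_ge0. have n2 : 0 <= NY (g n y - H y) by exact: N_ge0.
  have n3 : 0 <= NY (g n z - H z) by exact: N_ge0. have n4 : 0 <= NY (g n y) by exact: N_ge0. have n5 : 0 <= NY (g n z) by exact: N_ge0.
  have t1 : NY (g n x - H x) * NY (g n y) * NY (g n z) <= K x * q ^+ n * By * Bz :=
    ler_pM (mulr_ge0 n1 n4) n5 (ler_pM n1 n4 hx gy) gz.
  have t2 : NY (H x) * NY (g n y - H y) * NY (g n z) <= NY (H x) * (K y * q ^+ n) * Bz :=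
    ler_pM (mulr_ge0 hHx n2) n5 (ler_pM hHx n2 (lexx _) hy) gz.
  have t3 : NY (H x) * NY (H y) * NY (g n z - H z) <= NY (H x) * NY (H y) * (K z * q ^+ n) :=
    ler_pM (mulr_ge0 hHx hHy) n3 (lexx _) hz.
  apply: le_trans (lerD (lerD t1 t2) t3) _.
  by rewrite keyb3.
have S0 : 0 <= K x * By * Bz + NY (H x) * K y * Bz + NY (H x) * NY (H y) * K z.
  apply: addr_ge0; first apply: addr_ge0.
  - exact: (mulr_ge0 (mulr_ge0 (K_ge0 x) hBy) hBz).
  - exact: (mulr_ge0 (mulr_ge0 hHx (K_ge0 y)) hBz).
  - exact: (mulr_ge0 (mulr_ge0 hHx hHy) (K_ge0 z)).
have b3' := le_trans b3 (qr n S0).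
have b1'' := le_trans b1 b1'.
apply: le_trans (lerD b1'' (lerD b2' b3')) _.
exact: key3.
Qed.

Lemma H_star x y z : H (actX (starA (ipX x y)) z) = actY (starB (ipY (H x) (H y))) (H z).
Proof. by rewrite (hm_ip_star HX) (hm_ip_star HY); exact: H_hom. Qed.

Lemma H0 : H 0 = 0.
Proof.
have h1 : cabs (1 : R[i]) = 1 by apply: cabs1; rewrite expr0n /= expr1n addr0.
have := H_tadd 0 0 h1; rewrite scaler0 addr0 scale1r => h.
by apply: (addrI (H 0)); rewrite -h addr0.
Qed.

Lemma H_addd x y : H (x + y) = H x + H y.
Proof.
have h1 : cabs (1 : R[i]) = 1 by apply: cabs1; rewrite expr0n /= expr1n addr0.
by have := H_tadd x y h1; rewrite !scale1r.
Qed.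

Lemma H_MN x M : H (x *+ M) = H x *+ M.
Proof. elim: M => [|M IH]; first by rewrite !mulr0n H0. by rewrite !mulrS H_addd IH. Qed.

Lemma H_lin (l : R[i]) x y : H (l *: x + y) = l *: H x + H y.
Proof.
rewrite H_addd; congr (_ + _).
have [M [mu1 [mu2 [h1 [h2 ->]]]]] := decompM l.
rewrite -!scalerMnl H_MN !scalerDl H_addd.
have hu mu z : cabs mu = 1 -> H (mu *: z) = mu *: H z.
  by move=> hm; have := H_tadd z 0 hm; rewrite !addr0 H0 addr0.
by rewrite hu // hu.
Qed.

Lemma lin_scale (G : X -> Y) : (forall (l : R[i]) x y, G (l *: x + y) = l *: G x + G y) ->
  forall l x, G (l *: x) = l *: G x.
Proof.
move=> hG.
have G0 : G 0 = 0.
  have := hG 1 0 0; rewrite scaler0 addr0 scale1r => h.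
  by apply: (addrI (G 0)); rewrite -h addr0.
by move=> l x; have := hG l x 0; rewrite !addr0 G0 addr0.
Qed.

Definition C0 := (2 * theta) / (2 `^ p - 2 ^+ 3).

Lemma uniq_H (G G' : X -> Y) :
  (forall (l : R[i]) x y, G (l *: x + y) = l *: G x + G y) ->
  (forall (l : R[i]) x y, G' (l *: x + y) = l *: G' x + G' y) ->
  (forall x, NY (f x - G x) <= C0 * NX x `^ p) ->
  (forall x, NY (f x - G' x) <= C0 * NX x `^ p) -> G = G'.
Proof.
move=> hG hG' bG bG'.
have C00 : 0 <= C0.
  rewrite /C0 divr_ge0 ?mulr_ge0 //; have := PP_gt; rewrite /PP; lra.
apply: functional_extensionality => x.
apply/eqP; rewrite -subr_eq0; apply/eqP.
apply: (@zero_of_bound _ (2 * C0 * NX x `^ p)).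
  by apply: mulr_ge0; [apply: mulr_ge0 | exact: powR_ge0].
move=> n.
have e : G x - G' x = tc n *: (G (sc n *: x) - G' (sc n *: x)).
  by rewrite scalerBr -(lin_scale hG) -(lin_scale hG') !scalerA tcsc !scale1r.
rewrite e NYZ cabs_tc.
have h := NY3 (G (sc n *: x)) (f (sc n *: x)) (G' (sc n *: x)).
rewrite [NY (G _ - f _)]NYB in h.
have b2 := bG (sc n *: x); have b1 := bG' (sc n *: x).
rewrite pow_sc in b1; rewrite pow_sc in b2.
have a0 : 0 <= 2 * C0 * NX x `^ p by rewrite mulr_ge0 ?powR_ge0 // mulr_ge0.
apply: le_trans (qr n a0).
have h2 : 0 <= (2:R) ^+ n by rewrite exprn_ge0.
apply: le_trans (ler_wpM2l h2 h) _.
apply: le_trans (ler_wpM2l h2 (lerD b2 b1)) _.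
rewrite /q exprMn le_eqVlt; apply/orP; left; apply/eqP; ring.
Qed.

Lemma main_sec : exists! H0 : X -> Y,
    hilbert_star_hom starA starB actX ipX actY ipY H0 /\
    (forall x : X,
       hm_norm nB ipY (f x - H0 x)
         <= (2 * theta) / (2 `^ p - 2 ^+ 3) * hm_norm nA ipX x `^ p).
Proof.
exists H; split.
  split; first split; first split.
  - exact: H_lin.
  - exact: H_hom.
  - exact: H_star.
  - exact: H_bound.
move=> G [[[hGl _] _] hGb].
apply: (@uniq_H H G) => //.
- exact: H_lin.
- exact: H_bound.
Qed.
End Main.

End Aux.

Theorem corollary3p4 (R : realType)
  (A : lmodType R[i]) (mulA : A -> A -> A) (starA : A -> A) (nA : A -> R)
  (B : lmodType R[i]) (mulB : B -> B -> B) (starB : B -> B) (nB : B -> R)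
  (X : lmodType R[i]) (actX : A -> X -> X) (ipX : X -> X -> A)
  (Y : lmodType R[i]) (actY : B -> Y -> Y) (ipY : Y -> Y -> B)
  (HA : is_cstar_algebra mulA starA nA)
  (HB : is_cstar_algebra mulB starB nB)
  (HX : is_hilbert_module mulA starA nA actX ipX)
  (HY : is_hilbert_module mulB starB nB actY ipY)
  (p theta : R) (f : X -> Y) :
  3 < p -> 0 <= theta ->
  (forall (mu : R[i]) (x y : X), cabs mu = 1 ->
     hm_norm nB ipY (f (mu *: x + y) - mu *: f x - f y)
       <= theta * (hm_norm nA ipX x `^ p + hm_norm nA ipX y `^ p)) ->
  (forall x y z : X,
     hm_norm nB ipY (f (actX (ipX x y) z) - actY (ipY (f x) (f y)) (f z))
       <= theta * (hm_norm nA ipX x `^ p + hm_norm nA ipX y `^ p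
                   + hm_norm nA ipX z `^ p)) ->
  (forall x y z : X,
     hm_norm nB ipY (f (actX (starA (ipX x y)) z)
                     - actY (starB (ipY (f x) (f y))) (f z))
       <= theta * (hm_norm nA ipX x `^ p + hm_norm nA ipX y `^ p
                   + hm_norm nA ipX z `^ p)) ->
  exists! H : X -> Y,
    hilbert_star_hom starA starB actX ipX actY ipY H /\
    (forall x : X,
       hm_norm nB ipY (f x - H x)
         <= (2 * theta) / (2 `^ p - 2 ^+ 3) * hm_norm nA ipX x `^ p).
Proof.
move=> hp ht hadd hhom _.
exact: (@Aux.main_sec R A mulA starA nA B mulB starB nB X actX ipX Y actY ipY HA HB HX HY p theta f hp ht hadd hhom).
Qed.
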